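(* Let $\mathcal C$ be a category all of whose morphisms are monomorphisms and which has binary joins of subobjects, and let $\perp$ be an independence relation on $\mathcal C$ satisfying invariance, monotonicity, transitivity, symmetry, existence, base monotonicity and $3$-amalgamation. Then $\perp$ satisfies strong $3$-amalgamation.
   Context: A commuting square consists of objects $C,A,B,M$ and morphisms $C\to A$, $C\to B$, $A\to M$, $B\to M$ with equal composites $C\to M$. An independence relation $\perp$ is a class of commuting squares (called independent); write $A\perp^M_C B$. Properties (all diagrams commute): Invariance: for a square $C\to A,C\to B,A\to M,B\to M$ and any $M\to N$, $A\perp^M_C B$ iff the square with $A\to M\to N$, $B\to M\to N$ is independent. Monotonicity: if $A\perp^M_C B$ and $C\to B$ factors as $C\to B'\to B$, then the square $C\to A$, $C\to B'$, $A\to M$, $B'\to B\to M$ is independent. Transitivity: if $(C\to A,C\to B,A\to M,B\to M)$ and $(B\to M,B\to D,M\to N,D\to N)$ are independent then so is $(C\to A, C\to B\to D, A\to M\to N, D\to N)$. Symmetry: $A\perp^M_C B$ iff $B\perp^M_C A$. Existence: every span $A\leftarrow C\to B$ can be completed to an independent square. Base monotonicity: if $A\perp^M_C D$ and $C\to D$ factors as $C\to B\to D$, then there are $A',N$ and morphisms $A\to A'$, $B\to A'$, $A'\to N$, $M\to N$ making everything commute such that the square $B\to A'$, $B\to D$, $A'\to N$, $D\to M\to N$ is independent. A horn consists of morphisms $M\to A$, $M\to B$, $M\to C$, $A\to N_1$, $B\to N_1$, $A\to N_2$, $C\to N_2$, $B\to N_3$, $C\to N_3$ with the three squares (tops $N_1,N_2,N_3$)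 commuting; it is independent if these three squares are. $3$-amalgamation: for every independent horn there are $N$ and $N_i\to N$ ($i=1,2,3$) making the cube commute and with $A\perp^N_M N_3$ (square $M\to A$, $M\to N_3$, $A\to N$, $N_3\to N$). Strong $3$-amalgamation: for every independent horn there are $N$ and $N_i\to N$ making the cube commute and such that all six faces of the cube are independent. Binary joins of subobjects: any two subobjects of an object have a least upper bound among subobjects. *)

(* Defs.v *)
Set Implicit Arguments.
Unset Strict Implicit.

(** Categories, composition written in diagrammatic order: [f ;; g] is
    "first f, then g" (i.e. g ∘ f). *)
Record Category : Type := {
  Obj :> Type;
  Hom : Obj -> Obj -> Type;
  idm : forall a, Hom a a;
  comp : forall a b c, Hom a b -> Hom b c -> Hom a c;
  comp_assoc : forall a b c d (f : Hom a b) (g : Hom b c) (h : Hom c d),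
      comp (comp f g) h = comp f (comp g h);
  comp_id_l : forall a b (f : Hom a b), comp (idm a) f = f;
  comp_id_r : forall a b (f : Hom a b), comp f (idm b) = f
}.

Arguments Hom {c} _ _ : rename.
Arguments idm {c} _ : rename.
Arguments comp {c a b c0} _ _ : rename.
Notation "f ;; g" := (comp f g) (at level 40, left associativity).

Section Defs.
Variable K : Category.

Definition mono {a b : K} (m : Hom a b) : Prop :=
  forall x (u v : Hom x a), u ;; m = v ;; m -> u = v.

Definition all_mono : Prop := forall (a b : K) (m : Hom a b), mono m.

Definition factors_through {a b x : K} (m : Hom a x) (n : Hom b x) : Prop :=
  exists t : Hom a b, m = t ;; n.

Definition has_binary_joins : Prop :=
  forall (X A B : K) (a : Hom A X) (b : Hom B X), mono a -> mono b ->
    exists (J : K) (j : Hom J X),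
      mono j /\ factors_through a j /\ factors_through b j /\
      (forall (S : K) (s : Hom S X), mono s ->
         factors_through a s -> factors_through b s -> factors_through j s).

Definition commutes {C A B M : K} (f : Hom C A) (g : Hom C B)
  (h : Hom A M) (k : Hom B M) : Prop := f ;; h = g ;; k.

(** A candidate relation on squares; [Ind f g h k] means A ⊥^M_C B. *)
Definition indep_rel : Type :=
  forall (C A B M : K), Hom C A -> Hom C B -> Hom A M -> Hom B M -> Prop.

Variable Ind : indep_rel.

Definition only_commuting : Prop :=
  forall C A B M (f : Hom C A) (g : Hom C B) (h : Hom A M) (k : Hom B M),
    Ind f g h k -> commutes f g h k.

Definition invariance : Prop :=
  forall C A B M N (f : Hom C A) (g : Hom C B) (h : Hom A M) (k : Hom B M)
    (n : Hom M N),
    commutes f g h k -> (Ind f g h k <-> Ind f g (h ;; n) (k ;; n)).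

Definition monotonicity : Prop :=
  forall C A B B' M (f : Hom C A) (g : Hom C B) (h : Hom A M) (k : Hom B M)
    (g' : Hom C B') (b : Hom B' B),
    Ind f g h k -> g = g' ;; b -> Ind f g' h (b ;; k).

Definition transitivity : Prop :=
  forall C A B M D N (f : Hom C A) (g : Hom C B) (h : Hom A M) (k : Hom B M)
    (d : Hom B D) (h' : Hom M N) (e : Hom D N),
    Ind f g h k -> Ind k d h' e -> Ind f (g ;; d) (h ;; h') e.

Definition symmetry : Prop :=
  forall C A B M (f : Hom C A) (g : Hom C B) (h : Hom A M) (k : Hom B M),
    Ind f g h k <-> Ind g f k h.

Definition existence : Prop :=
  forall C A B (f : Hom C A) (g : Hom C B),
    exists (M : K) (h : Hom A M) (k : Hom B M), Ind f g h k.

Definition base_monotonicity : Prop :=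
  forall C A B D M (f : Hom C A) (d : Hom C D) (h : Hom A M) (k : Hom D M)
    (g : Hom C B) (b : Hom B D),
    Ind f d h k -> d = g ;; b ->
    exists (A' N : K) (u : Hom A A') (v : Hom B A') (p : Hom A' N) (q : Hom M N),
      f ;; u = g ;; v /\ u ;; p = h ;; q /\ v ;; p = b ;; (k ;; q) /\
      Ind v b p (k ;; q).

Definition horn {M A B C N1 N2 N3 : K} (a : Hom M A) (b : Hom M B) (c : Hom M C)
  (a1 : Hom A N1) (b1 : Hom B N1) (a2 : Hom A N2) (c2 : Hom C N2)
  (b3 : Hom B N3) (c3 : Hom C N3) : Prop :=
  commutes a b a1 b1 /\ commutes a c a2 c2 /\ commutes b c b3 c3.

Definition indep_horn {M A B C N1 N2 N3 : K} (a : Hom M A) (b : Hom M B)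
  (c : Hom M C) (a1 : Hom A N1) (b1 : Hom B N1) (a2 : Hom A N2) (c2 : Hom C N2)
  (b3 : Hom B N3) (c3 : Hom C N3) : Prop :=
  horn a b c a1 b1 a2 c2 b3 c3 /\
  Ind a b a1 b1 /\ Ind a c a2 c2 /\ Ind b c b3 c3.

Definition cube_commutes {M A B C N1 N2 N3 N : K} (a : Hom M A) (b : Hom M B)
  (c : Hom M C) (a1 : Hom A N1) (b1 : Hom B N1) (a2 : Hom A N2) (c2 : Hom C N2)
  (b3 : Hom B N3) (c3 : Hom C N3) (n1 : Hom N1 N) (n2 : Hom N2 N)
  (n3 : Hom N3 N) : Prop :=
  commutes a1 a2 n1 n2 /\ commutes b1 b3 n1 n3 /\ commutes c2 c3 n2 n3.

Definition three_amalgamation : Prop :=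
  forall M A B C N1 N2 N3 (a : Hom M A) (b : Hom M B) (c : Hom M C)
    (a1 : Hom A N1) (b1 : Hom B N1) (a2 : Hom A N2) (c2 : Hom C N2)
    (b3 : Hom B N3) (c3 : Hom C N3),
    indep_horn a b c a1 b1 a2 c2 b3 c3 ->
    exists (N : K) (n1 : Hom N1 N) (n2 : Hom N2 N) (n3 : Hom N3 N),
      cube_commutes a b c a1 b1 a2 c2 b3 c3 n1 n2 n3 /\
      (* A ⊥^N_M N3, square M -> A, M -> N3 (= b;;b3 = c;;c3), A -> N, N3 -> N *)
      Ind a (b ;; b3) (a1 ;; n1) n3.

Definition strong_three_amalgamation : Prop :=
  forall M A B C N1 N2 N3 (a : Hom M A) (b : Hom M B) (c : Hom M C)
    (a1 : Hom A N1) (b1 : Hom B N1) (a2 : Hom A N2) (c2 : Hom C N2)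
    (b3 : Hom B N3) (c3 : Hom C N3),
    indep_horn a b c a1 b1 a2 c2 b3 c3 ->
    exists (N : K) (n1 : Hom N1 N) (n2 : Hom N2 N) (n3 : Hom N3 N),
      cube_commutes a b c a1 b1 a2 c2 b3 c3 n1 n2 n3 /\
      Ind a b a1 b1 /\ Ind a c a2 c2 /\ Ind b c b3 c3 /\
      Ind a1 a2 n1 n2 /\ Ind b1 b3 n1 n3 /\ Ind c2 c3 n2 n3.

End Defs.

(* Main.v *)
Require Import Defs.

Lemma rw2 (K : Category) (x y z w v : K) (f : Hom x y) (g : Hom y w) (h : Hom x z) (k : Hom z w)
  (r : Hom w v) : f ;; g = h ;; k -> f ;; (g ;; r) = h ;; (k ;; r).
Proof. intro E. rewrite <- !comp_assoc. rewrite E. reflexivity. Qed.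

Lemma phase2 (K : Category) (Ind : indep_rel K) :
  all_mono K ->
  has_binary_joins K ->
  only_commuting Ind ->
  invariance Ind ->
  monotonicity Ind ->
  transitivity Ind ->
  symmetry Ind ->
  existence Ind ->
  base_monotonicity Ind ->
  forall M A B C N1 N2 N3 (a : Hom M A) (b : Hom M B) (c : Hom M C)
    (a1 : Hom A N1) (b1 : Hom B N1) (a2 : Hom A N2) (c2 : Hom C N2)
    (b3 : Hom B N3) (c3 : Hom C N3),
  a;;a1 = b;;b1 -> a;;a2 = c;;c2 -> b;;b3 = c;;c3 ->
  Ind _ _ _ _ a b a1 b1 -> Ind _ _ _ _ a c a2 c2 -> Ind _ _ _ _ b c b3 c3 ->
  forall N (n1 : Hom N1 N) (n2 : Hom N2 N) (n3 : Hom N3 N),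
  a1;;n1 = a2;;n2 -> b1;;n1 = b3;;n3 -> c2;;n2 = c3;;n3 ->
  Ind _ _ _ _ c2 c3 n2 n3 ->
    exists (N : K) (n1 : Hom N1 N) (n2 : Hom N2 N) (n3 : Hom N3 N),
      cube_commutes a b c a1 b1 a2 c2 b3 c3 n1 n2 n3 /\
      Ind _ _ _ _ a b a1 b1 /\ Ind _ _ _ _ a c a2 c2 /\ Ind _ _ _ _ b c b3 c3 /\
      Ind _ _ _ _ a1 a2 n1 n2 /\ Ind _ _ _ _ b1 b3 n1 n3 /\ Ind _ _ _ _ c2 c3 n2 n3.
Proof.
  intros Hmono Hjoin Hcom Hinv Hmon Htr Hsym Hex Hbm.
  intros M A B C N1 N2 N3 a b c a1 b1 a2 c2 b3 c3 Hab Hac Hbc I1 I2 I3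
    N n1 n2 n3 G1 G2 G3 I23.
  pose proof (Htr _ _ _ _ _ _ _ _ _ _ _ _ _ I2 I23) as IA3.
  destruct (Hbm _ _ _ _ _ a (c;;c3) (a2;;n2) n3 b b3 IA3 (eq_sym Hbc))
    as [A' [R1 [u1 [v1 [p1 [q1 [H1 [H2 [H3 IA']]]]]]]]].
  pose proof (Htr _ _ _ _ _ _ _ _ _ _ _ _ _ I3 (proj1 (Hsym _ _ _ _ _ _ _ _) I23)) as IB2.
  pose proof (proj1 (Hinv _ _ _ _ _ _ _ _ _ q1 (Hcom _ _ _ _ _ _ _ _ IB2)) IB2) as IB2'.
  destruct (Hbm _ _ _ _ _ b (c;;c2) (b3;;n3;;q1) (n2;;q1) a a2 IB2' (eq_sym Hac))
    as [B'' [R2 [u2 [v2 [p2 [q2 [K1 [K2 [K3 IB'']]]]]]]]].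
  destruct (Hjoin R2 A B (a1;;n1;;q1;;q2) (b1;;n1;;q1;;q2) (Hmono _ _ _) (Hmono _ _ _))
    as [J [jj [_ [[aJ EA] [[bJ EB] U]]]]].
  destruct (U N1 (n1;;q1;;q2) (Hmono _ _ _)) as [tt Et].
  { exists a1. rewrite !comp_assoc. reflexivity. }
  { exists b1. rewrite !comp_assoc. reflexivity. }
  destruct (U A' (p1;;q2) (Hmono _ _ _)) as [s1 Es1].
  { exists u1. rewrite <- (comp_assoc u1), H2, G1. reflexivity. }
  { exists v1. rewrite <- (comp_assoc v1), H3, G2, !comp_assoc. reflexivity. }
  destruct (U B'' p2 (Hmono _ _ _)) as [s2 Es2].
  { exists v2. rewrite K3, G1, !comp_assoc. reflexivity. }
  { exists u2. rewrite K2, G2. reflexivity. }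
  assert (aJt : aJ;;tt = a1).
  { apply (Hmono _ _ (n1;;q1;;q2)). rewrite (comp_assoc aJ tt), <- Et, <- EA, !comp_assoc. reflexivity. }
  assert (bJt : bJ;;tt = b1).
  { apply (Hmono _ _ (n1;;q1;;q2)). rewrite (comp_assoc bJ tt), <- Et, <- EB, !comp_assoc. reflexivity. }
  assert (v1e : v1 = bJ;;s1).
  { apply (Hmono _ _ (p1;;q2)). rewrite (comp_assoc bJ s1), <- Es1, <- EB.
    rewrite <- (comp_assoc v1), H3, G2, !comp_assoc. reflexivity. }
  assert (v2e : v2 = aJ;;s2).
  { apply (Hmono _ _ p2). rewrite (comp_assoc aJ s2), <- Es2, <- EA, K3, G1, !comp_assoc. reflexivity. }
  assert (IJB : Ind _ _ _ _ b3 bJ (n3;;q1;;q2) jj).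
  { pose proof (proj1 (Hinv _ _ _ _ _ _ _ _ _ q2 (Hcom _ _ _ _ _ _ _ _ IA')) IA') as X.
    apply (proj1 (Hsym _ _ _ _ _ _ _ _)) in X.
    rewrite Es1. exact (Hmon _ _ _ _ _ _ _ _ _ bJ s1 X v1e). }
  assert (IJA : Ind _ _ _ _ a2 aJ (n2;;q1;;q2) jj).
  { rewrite Es2. exact (Hmon _ _ _ _ _ _ _ _ _ aJ s2 (proj1 (Hsym _ _ _ _ _ _ _ _) IB'') v2e). }
  destruct (Hex J R2 N1 jj tt) as [R3 [r3 [s1' IR]]].
  pose proof (Hcom _ _ _ _ _ _ _ _ IR) as IRc. unfold commutes in IRc.
  pose proof (Htr _ _ _ _ _ _ _ _ _ _ _ _ _ IJB IR) as T1. rewrite bJt in T1.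
  apply (proj1 (Hsym _ _ _ _ _ _ _ _)) in T1.
  pose proof (Htr _ _ _ _ _ _ _ _ _ _ _ _ _ IJA IR) as T2. rewrite aJt in T2.
  apply (proj1 (Hsym _ _ _ _ _ _ _ _)) in T2.
  pose proof (proj1 (Hinv _ _ _ _ _ _ _ _ _ (q1;;q2;;r3) (Hcom _ _ _ _ _ _ _ _ I23)) I23) as T3.
  repeat rewrite comp_assoc in T1. repeat rewrite comp_assoc in T2. repeat rewrite comp_assoc in T3.
  exists R3, s1', (n2;;(q1;;(q2;;r3))), (n3;;(q1;;(q2;;r3))).
  split; [|split; [exact I1|split; [exact I2|split; [exact I3|split; [exact T2|split; [exact T1|exact T3]]]]]].
  unfold cube_commutes, commutes. split; [|split].
  - rewrite <- aJt, (comp_assoc aJ tt), <- IRc, <- (comp_assoc aJ jj), <- EA, G1, !comp_assoc. reflexivity.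
  - rewrite <- bJt, (comp_assoc bJ tt), <- IRc, <- (comp_assoc bJ jj), <- EB, G2, !comp_assoc. reflexivity.
  - rewrite <- !comp_assoc, G3. reflexivity.
Qed.


Theorem theorem6p2 (K : Category) (Ind : indep_rel K) :
  all_mono K ->
  has_binary_joins K ->
  only_commuting Ind ->
  invariance Ind ->
  monotonicity Ind ->
  transitivity Ind ->
  symmetry Ind ->
  existence Ind ->
  base_monotonicity Ind ->
  three_amalgamation Ind ->
  strong_three_amalgamation Ind.
Proof.
  intros Hmono Hjoin Hcom Hinv Hmon Htr Hsym Hex Hbm H3.
  intros M A B C N1 N2 N3 a b c a1 b1 a2 c2 b3 c3 Hh.
  destruct Hh as [[Hab [Hac Hbc]] [I1 [I2 I3]]].
  unfold commutes in *.
  destruct (H3 M B A C N1 N3 N2 b a c b1 a1 b3 c3 a2 c2) as [N0 [m1 [m3 [m2 [[E1 [E2 E3]] IB]]]]].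
  { split. split; [symmetry; exact Hab| split; assumption].
    split; [apply Hsym; exact I1| split; assumption]. }
  unfold commutes in E1, E2, E3.
  destruct (Hbm M B C N2 N0 b (a;;a2) (b1;;m1) m2 c c2 IB Hac)
    as [B' [N0' [u [v [p [q [F1 [F2 [F3 IB']]]]]]]]].
  destruct (Hjoin N0' B C (b3;;m3;;q) (c3;;m3;;q) (Hmono _ _ _) (Hmono _ _ _))
    as [K0 [kk [_ [[bK EB] [[cK EC] U]]]]].
  destruct (U B' p (Hmono _ _ _)) as [s Es].
  { exists u. rewrite F2, comp_assoc, E1. rewrite !comp_assoc. reflexivity. }
  { exists v. rewrite F3, E3, comp_assoc. reflexivity. }
  destruct (U N3 (m3;;q) (Hmono _ _ _)) as [t Et].
  { exists b3. rewrite comp_assoc. reflexivity. }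
  { exists c3. rewrite comp_assoc. reflexivity. }
  assert (cKt : cK;;t = c3).
  { apply (Hmono _ _ (m3;;q)). rewrite (comp_assoc cK t), <- Et, <- EC, comp_assoc. reflexivity. }
  assert (bKt : bK;;t = b3).
  { apply (Hmono _ _ (m3;;q)). rewrite (comp_assoc bK t), <- Et, <- EB, comp_assoc. reflexivity. }
  assert (vs : v = cK;;s).
  { apply (Hmono _ _ p). rewrite comp_assoc, <- Es, <- EC, F3, E3, comp_assoc. reflexivity. }
  assert (IK : Ind _ _ _ _ c2 cK (m2;;q) kk).
  { rewrite Es. exact (Hmon _ _ _ _ _ _ _ _ _ cK s (proj1 (Hsym _ _ _ _ _ _ _ _) IB') vs). }
  destruct (Hex K0 N0' N3 kk t) as [R1 [r [s3 IR]]].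
  pose proof (Hcom _ _ _ _ _ _ _ _ IR) as IRc. unfold commutes in IRc.
  pose proof (Htr _ _ _ _ _ _ _ _ _ _ _ _ _ IK IR) as I23. rewrite cKt in I23.
  apply (phase2 K Ind Hmono Hjoin Hcom Hinv Hmon Htr Hsym Hex Hbm _ _ _ _ _ _ _ _ _ _ _ _ _ _ _ _ Hab Hac Hbc I1 I2 I3 _
          (m1;;q;;r) (m2;;q;;r) s3); try exact I23.
  - rewrite <- !comp_assoc, E2. reflexivity.
  - rewrite <- !comp_assoc, E1, EB, comp_assoc, IRc, <- comp_assoc, bKt. reflexivity.
  - rewrite <- !comp_assoc, <- E3, EC, comp_assoc, IRc, <- comp_assoc, cKt. reflexivity.
Qed.
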